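(* Let $S$ be a finite $p$-group and $\mathcal{A}$ a bifree $S$-algebra. If $\mathcal{A}(S)\neq0$ and there exists an $(S,S)$-invariant $\mathcal{O}$-basis $Y$ of $\mathcal{A}$ with $Y\subseteq\mathcal{A}^\times$, then $\mathcal{A}$ is divisible.
   Context: $\mathcal{O}$ is a complete local noetherian domain with maximal ideal $\mathfrak{m}$ and algebraically closed residue field $k$ of characteristic $p$ (possibly $\mathcal{O}=k$). An interior $S$-algebra is an $\mathcal{O}$-algebra $\mathcal{A}$, free of finite rank as an $\mathcal{O}$-module, with a group homomorphism $S\to\mathcal{A}^\times$; $S\times S$ acts on $\mathcal{A}$ by $(s,t)\cdot a=sat^{-1}$. It is a bifree $S$-algebra if it has an $\mathcal{O}$-basis $Y$ with $sY=Y=Ys$ for all $s\in S$ (an $(S,S)$-invariant basis) on which the left and right $S$-actions are free. For a subgroup $U\le S\times S$ the Brauer quotient is $\mathcal{A}(U)=\mathcal{A}^U/(\mathfrak{m}\mathcal{A}^U+\sum_{V<U}\mathrm{tr}_V^U(\mathcal{A}^V))$. For $P\le S$ and injective homomorphism $\varphi:P\to S$, $\mathcal{A}(\varphi)$ denotes $\mathcal{A}(\Delta(\varphi,P))$ with $\Delta(\varphi,P)=\{(\varphi(p),p):p\in P\}$, and $\mathcal{A}(P)=\mathcal{A}(\iota_P)$ for the inclusion $\iota_P$. The fixed-point fusion presystem $\mathfrak{F}_S(\mathcal{A})$ has objects the subgroups of $S$ and $\mathrm{Hom}(P,Q)=\{\varphi:P\to Q$ injective homomorphism $:\mathcal{A}(\varphi)\neq0\}$.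 $\mathcal{A}$ is divisible if $\mathfrak{F}_S(\mathcal{A})$ contains all inclusions between subgroups of $S$, is closed under composition (so is a category), and every morphism $\varphi:P\to Q$ is an inclusion composed with a group isomorphism $P\to\varphi(P)$ that is an isomorphism in $\mathfrak{F}_S(\mathcal{A})$ (its inverse also lies in $\mathfrak{F}_S(\mathcal{A})$). *)

(* Defs.v *)
From HB Require Import structures.
From mathcomp Require Import all_boot all_order all_algebra all_fingroup all_solvable.
Set Implicit Arguments. Unset Strict Implicit. Unset Printing Implicit Defensive.
Import GRing.Theory.
Local Open Scope ring_scope.

Section Coefficients.
Variable O : idomainType.
Variable m : O -> Prop.

Definition is_ideal (I : O -> Prop) : Prop :=
  [/\ I 0, (forall x y, I x -> I y -> I (x + y)) & (forall r x, I x -> I (r * x))].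

Definition local_with_max (m : O -> Prop) : Prop :=
  [/\ is_ideal m, ~ m 1 & forall x, ~ m x -> x \is a GRing.unit].

Definition noetherian_ring : Prop :=
  forall I : O -> Prop, is_ideal I ->
    exists (n : nat) (g : 'I_n -> O), forall x,
      I x <-> exists c : 'I_n -> O, x = \sum_(i < n) c i * g i.

Fixpoint ideal_pow (n : nat) : O -> Prop :=
  match n with
  | 0 => fun _ => True
  | n'.+1 => fun x => exists (k : nat) (a b : 'I_k -> O),
      (forall i, m (a i) /\ ideal_pow n' (b i)) /\ x = \sum_(i < k) a i * b i
  end.

Definition madic_complete : Prop :=
  (forall x, (forall n, ideal_pow n x) -> x = 0) /\
  (forall u : nat -> O, (forall n, ideal_pow n (u n.+1 - u n)) ->
     exists l, forall n, ideal_pow n (u n - l)).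

(* the residue field O/m is algebraically closed: every non-constant monic
   polynomial over O has a root modulo m *)
Definition residue_alg_closed : Prop :=
  forall f : {poly O}, f \is monic -> (1 < size f)%N -> exists a, m f.[a].

Definition residue_char (p : nat) : Prop := prime p /\ m p%:R.

Definition standing_O (p : nat) : Prop :=
  [/\ local_with_max m, noetherian_ring, madic_complete,
      residue_alg_closed & residue_char p].
End Coefficients.

Section Algebras.
Variable O : idomainType.
Variable m : O -> Prop.
Variable A : algType O.
Variable gT : finGroupType.
Variable S : {group gT}.
Variable phi : gT -> A.   (* the structural map S -> A^x *)

Definition interior_map : Prop :=
  phi 1%g = 1 /\ {in S &, forall s t, phi (s * t)%g = phi s * phi t}.

Definition is_basis (n : nat) (b : 'I_n -> A) : Prop :=
  injective b /\
  forall a : A, exists! c : {ffun 'I_n -> O}, a = \sum_(i < n) c i *: b i.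

Definition in_basis n (b : 'I_n -> A) (y : A) : Prop := exists i, b i = y.

Definition SS_invariant n (b : 'I_n -> A) : Prop :=
  forall s, s \in S -> forall y,
    (in_basis b y <-> exists2 y', in_basis b y' & y = phi s * y') /\
    (in_basis b y <-> exists2 y', in_basis b y' & y = y' * phi s).

Definition free_actions n (b : 'I_n -> A) : Prop :=
  forall s, s \in S -> forall y, in_basis b y ->
    (phi s * y = y -> s = 1%g) /\ (y * phi s = y -> s = 1%g).

Definition bifree : Prop :=
  interior_map /\
  exists (n : nat) (b : 'I_n -> A),
    [/\ is_basis b, SS_invariant b & free_actions b].

Definition act2 (st : gT * gT) (a : A) : A := phi st.1 * a * phi (st.2)^-1%g.

Definition fixed_by (U : {set gT * gT}) (a : A) : Prop :=
  forall u, u \in U -> act2 u a = a.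

Definition rtrace (V U : {set gT * gT}) (a : A) : A :=
  \sum_(C in lcosets V U) act2 (repr C) a.

Definition brauer_kernel (U : {set gT * gT}) (a : A) : Prop :=
  exists (k : nat) (c : 'I_k -> O) (x : 'I_k -> A) (f : {group gT * gT} -> A),
    [/\ forall i, m (c i) /\ fixed_by U (x i),
        forall V : {group gT * gT}, fixed_by V (f V) &
        a = \sum_(i < k) c i *: x i
            + \sum_(V : {group gT * gT} | V \proper U) rtrace V U (f V)].

Definition brauer_nonzero (U : {set gT * gT}) : Prop :=
  exists a, fixed_by U a /\ ~ brauer_kernel U a.

Definition twdiag (f : gT -> gT) (P : {set gT}) : {set gT * gT} :=
  [set (f x, x) | x in P].

(* Hom_{F_S(A)}(P, Q): injective homomorphisms f : P -> Q with A(f) <> 0 *)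
Definition fmor (P Q : {set gT}) (f : gT -> gT) : Prop :=
  [/\ [&& group_set P, P \subset S, group_set Q & Q \subset S],
      {in P &, {morph f : x y / (x * y)%g}},
      {in P &, injective f}, f @: P \subset Q
    & brauer_nonzero (twdiag f P)].

Definition divisible : Prop :=
  [/\
      (forall P Q : {group gT}, P \subset Q -> Q \subset S -> fmor P Q id),
      (forall (P Q R : {set gT}) (f g : gT -> gT),
          fmor P Q f -> fmor Q R g -> fmor P R (g \o f))
    &
      (forall (P Q : {set gT}) (f : gT -> gT), fmor P Q f ->
          fmor P (f @: P) f /\
          exists g : gT -> gT, [/\ fmor (f @: P) P g,
              {in P, cancel f g} & {in f @: P, cancel g f}])].
End Algebras.

Definition alg_unit (O : idomainType) (A : algType O) (a : A) : Prop :=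
  exists a' : A, a * a' = 1 /\ a' * a = 1.

(* Main.v *)
Require Import Defs.
From HB Require Import structures.
From mathcomp Require Import all_boot all_order all_algebra all_fingroup all_solvable.
From Stdlib Require Import ClassicalEpsilon.
Set Implicit Arguments. Unset Strict Implicit. Unset Printing Implicit Defensive.
Import GRing.Theory.
Local Open Scope ring_scope.

Section Main.
Variables (O : idomainType) (m : O -> Prop) (p : nat) (A : algType O).
Variables (gT : finGroupType) (S : {group gT}) (phi : gT -> A).
Hypothesis mI : is_ideal m.
Hypothesis m1 : ~ m 1.
Hypothesis mp : m p%:R.
Hypothesis pr : prime p.
Hypothesis phi1 : phi 1%g = 1.
Hypothesis phiM : {in S &, forall s t, phi (s*t)%g = phi s * phi t}.
Variables (n : nat) (b : 'I_n -> A).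
Hypothesis bB : is_basis b.
Hypothesis bI : SS_invariant S phi b.

Lemma ex_basis a : exists c : {ffun 'I_n -> O}, a = \sum_i c i *: b i.
Proof. by have [c [E _]] := proj2 bB a; exists c. Qed.

Definition coef (a : A) : {ffun 'I_n -> O} :=
  proj1_sig (constructive_indefinite_description _
    (ex_basis a)).

Lemma coefE a : a = \sum_i coef a i *: b i.
Proof. by rewrite /coef; case: constructive_indefinite_description. Qed.

Lemma coef_uniq a (c : {ffun 'I_n -> O}) : a = \sum_i c i *: b i -> coef a = c.
Proof.
move=> E; have [c0 [_ U]] := proj2 bB a.
by rewrite -(U c E) -(U (coef a) (coefE a)).
Qed.

Lemma coefD a a' i : coef (a + a') i = coef a i + coef a' i.
Proof.
have -> : coef (a + a') = [ffun j => coef a j + coef a' j].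
  apply: coef_uniq; rewrite {1}(coefE a) {1}(coefE a') -big_split /=.
  by apply: eq_bigr => j _; rewrite ffunE scalerDl.
by rewrite ffunE.
Qed.

Lemma coefZ c a i : coef (c *: a) i = c * coef a i.
Proof.
have -> : coef (c *: a) = [ffun j => c * coef a j].
  apply: coef_uniq; rewrite {1}(coefE a) scaler_sumr.
  by apply: eq_bigr => j _; rewrite ffunE scalerA.
by rewrite ffunE.
Qed.

Lemma coef0 i : coef 0 i = 0.
Proof. by rewrite -(scale0r 0) coefZ mul0r. Qed.

Lemma coef_sum I (r : seq I) (P : pred I) (F : I -> A) i :
  coef (\sum_(j <- r | P j) F j) i = \sum_(j <- r | P j) coef (F j) i.
Proof.
elim/big_rec2: _ => [|j x y _ <-]; first exact: coef0.
by rewrite coefD.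
Qed.

Lemma coef_b i j : coef (b i) j = (i == j)%:R.
Proof.
have -> : coef (b i) = [ffun j => (i == j)%:R].
  apply: coef_uniq; rewrite (bigD1 i) //= big1 ?addr0 ?ffunE ?eqxx ?scale1r //.
  by move=> k /negbTE; rewrite ffunE eq_sym => ->; rewrite scale0r.
by rewrite ffunE.
Qed.

Notation act := (act2 phi).
Notation SS := (setX S S).

Lemma phiVl s : s \in S -> phi (s^-1)%g * phi s = 1.
Proof. by move=> sS; rewrite -phiM ?groupV // mulVg. Qed.
Lemma phiVr s : s \in S -> phi s * phi (s^-1)%g = 1.
Proof. by move=> sS; rewrite -phiM ?groupV // mulgV. Qed.

Lemma act1 a : act 1%g a = a.
Proof. by rewrite /act2 /= invg1 phi1 mulr1 mul1r. Qed.

Lemma actM u v a : u \in SS -> v \in SS -> act (u * v)%g a = act u (act v a).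
Proof.
case: u v => [s t] [s' t']; rewrite !in_setX /= => /andP[sS tS] /andP[sS' tS'].
by rewrite /act2 /= invMg !phiM ?groupV // !mulrA.
Qed.

Lemma actD u a a' : act u (a + a') = act u a + act u a'.
Proof. by rewrite /act2 mulrDr mulrDl. Qed.
Lemma actZ u c a : act u (c *: a) = c *: act u a.
Proof. by rewrite /act2 (scalerAl c (phi u.1 * a)) scalerAr. Qed.
Lemma act_sum u I (r : seq I) (P : pred I) (F : I -> A) :
  act u (\sum_(j <- r | P j) F j) = \sum_(j <- r | P j) act u (F j).
Proof.
elim/big_rec2: _ => [|j x y _ <-]; first by rewrite /act2 mulr0 mul0r.
by rewrite actD.
Qed.

Lemma act_basis u i : u \in SS -> exists j, b j = act u (b i).
Proof.
case: u => [s t]; rewrite in_setX /= => /andP[sS tS].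
have [[_ H1] _] := bI sS (phi s * b i).
have [j Hj] : in_basis b (phi s * b i) by apply: H1; exists (b i) => //; exists i.
have [_ [_ H2]] := bI (groupVr tS) (b j * phi (t^-1)%g).
have [k Hk] : in_basis b (b j * phi (t^-1)%g) by apply: H2; exists (b j) => //; exists j.
by exists k; rewrite Hk Hj.
Qed.

Definition sig (u : gT * gT) (i : 'I_n) : 'I_n :=
  odflt i [pick j | b j == act u (b i)].

Lemma sigE u i : u \in SS -> b (sig u i) = act u (b i).
Proof.
move=> uS; rewrite /sig; case: pickP => [j /eqP //|].
by have [j Hj] := act_basis i uS => /(_ j); rewrite Hj eqxx.
Qed.

Lemma binj : injective b.
Proof. exact: proj1 bB. Qed.

Lemma sigM u v i : u \in SS -> v \in SS -> sig (u * v)%g i = sig u (sig v i).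
Proof.
by move=> uS vS; apply: binj; rewrite !sigE ?groupM // actM.
Qed.

Lemma sig1 i : sig 1%g i = i.
Proof. by apply: binj; rewrite sigE ?group1 // act1. Qed.

Lemma sigK u : u \in SS -> cancel (sig u) (sig (u^-1)%g).
Proof. by move=> uS i; rewrite -sigM ?groupV // mulVg sig1. Qed.

Lemma coef_act u a i : u \in SS -> coef (act u a) i = coef a (sig (u^-1)%g i).
Proof.
move=> uS.
have -> : coef (act u a) = [ffun j => coef a (sig (u^-1)%g j)].
  apply: coef_uniq; rewrite {1}(coefE a) act_sum.
  rewrite [RHS](reindex_inj (can_inj (sigK uS))) /=.
  apply: eq_bigr => j _; rewrite ffunE sigK // actZ sigE //.
by rewrite ffunE.
Qed.

Lemma m_add x y : m x -> m y -> m (x + y).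
Proof. by case: mI => _ H _; apply: H. Qed.
Lemma m_mull r x : m x -> m (r * x).
Proof. by case: mI => _ _ H; apply: H. Qed.
Lemma m_0 : m 0.
Proof. by case: mI. Qed.

Lemma m_sum I (r : seq I) (P : pred I) (F : I -> O) :
  (forall j, P j -> m (F j)) -> m (\sum_(j <- r | P j) F j).
Proof.
move=> H; elim/big_rec: _ => [|j x Pj mx]; first exact: m_0.
by apply: m_add => //; apply: H.
Qed.


Lemma trick (U : {group (gT * gT)}) (x L R : A) i :
  (p.-group U)%g ->
  (forall u a, u \in U -> coef (L * act u a * R) i = coef (L * a * R) i) ->
  ~ m (coef (L * x * R) i) ->
  ~ brauer_kernel m phi U x.
Proof.
move=> pU tr nm [k [c [y [f [Hc Hf Ex]]]]]; apply: nm; rewrite Ex.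
rewrite mulrDr mulrDl coefD; apply: m_add.
  rewrite mulr_sumr mulr_suml coef_sum; apply: m_sum => j _.
  rewrite -scalerAr -scalerAl coefZ mulrC; apply: m_mull.
  by case: (Hc j).
rewrite mulr_sumr mulr_suml coef_sum; apply: m_sum => V /andP[sVU nUV].
rewrite /rtrace mulr_sumr mulr_suml coef_sum.
rewrite (eq_bigr (fun _ => coef (L * f V * R) i)); last first.
  move=> C /lcosetsP[z zU ->]; apply: tr.
  have : repr (z *: V)%g \in (z *: V)%g by apply: mem_repr (lcoset_refl _ _).
  by case/lcosetP => v vV ->; rewrite groupM // (subsetP sVU).
rewrite sumr_const card_lcosets.
have pI : p.-nat #|U : V|%g by apply: pnat_dvd (dvdn_indexg U V) pU.
have [e He] := p_natP pI.
have : (1 < #|U : V|%g)%N by rewrite indexg_gt1.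
rewrite He; case: e He => [|e] He; first by [].
move=> _; rewrite expnS -mulr_natr natrM mulrA mulrAC; exact: m_mull.
Qed.

Section Fix.
Variable U : {group (gT * gT)}.
Hypothesis sUS : U \subset SS.

Let inS u : u \in U -> u \in SS. Proof. exact: (subsetP sUS). Qed.

Definition orb i := [set sig u i | u in U].
Definition stab i := [set u in U | sig u i == i].

Lemma stab_group i : group_set (stab i).
Proof.
apply/group_setP; split; first by rewrite inE group1 sig1 eqxx.
move=> u v; rewrite !inE => /andP[uU /eqP su] /andP[vU /eqP sv].
by rewrite groupM // sigM ?inS // sv su eqxx.
Qed.
Definition stabG i := Group (stab_group i).

Lemma orb_refl i : i \in orb i.
Proof. by apply/imsetP; exists 1%g => //; rewrite sig1. Qed.

Lemma orb_sym i j : j \in orb i -> i \in orb j.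
Proof.
case/imsetP => u uU ->; apply/imsetP; exists (u^-1)%g; rewrite ?groupV //.
by rewrite sigK ?inS.
Qed.

Lemma orb_trans i j k : j \in orb i -> k \in orb j -> k \in orb i.
Proof.
case/imsetP => u uU -> /imsetP[v vU ->]; apply/imsetP; exists (v * u)%g.
  by rewrite groupM.
by rewrite sigM ?inS.
Qed.

Lemma orb_eq i j : j \in orb i -> orb j = orb i.
Proof.
move=> ji; apply/setP => k; apply/idP/idP => [kj|ki]; first exact: orb_trans kj.
exact: orb_trans (orb_sym ji) ki.
Qed.

Definition rep i := odflt i [pick j in orb i].

Lemma rep_in i : rep i \in orb i.
Proof. by rewrite /rep; case: pickP => [j //|/(_ i)]; rewrite orb_refl. Qed.

Lemma rep_eq i j : j \in orb i -> rep j = rep i.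
Proof. by move=> ji; rewrite /rep (orb_eq ji); case: pickP => // /(_ i); rewrite orb_refl. Qed.

Lemma rep_rep i : rep (rep i) = rep i.
Proof. exact: rep_eq (rep_in i). Qed.

Lemma rep_orb i j : rep i = i -> (rep j == i) = (j \in orb i).
Proof.
move=> ri; apply/eqP/idP => [<-|ji]; last by rewrite (rep_eq ji).
exact: orb_sym (rep_in j).
Qed.

Lemma rtrace_b i :
  rtrace phi (stabG i) U (b i) = \sum_(j in orb i) b j.
Proof.
set V := stabG i.
have hE z : z \in U -> sig (repr (z *: V)%g) i = sig z i.
  move=> zU; have : repr (z *: V)%g \in (z *: V)%g by apply: mem_repr (lcoset_refl _ _).
  case/lcosetP => v; rewrite inE => /andP[vU /eqP sv] ->.
  by rewrite sigM ?inS // sv.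
rewrite /rtrace.
rewrite (eq_bigr (fun C => b (sig (repr C) i))); last first.
  move=> C /lcosetsP[z zU ->]; rewrite sigE //.
  have : repr (z *: V)%g \in (z *: V)%g by apply: mem_repr (lcoset_refl _ _).
  by case/lcosetP => v; rewrite inE => /andP[vU _] ->; rewrite inS ?groupM.
have -> : orb i = (fun C => sig (repr C) i) @: lcosets V U.
  apply/setP => j; apply/imsetP/imsetP => [[u uU ->]|[C /lcosetsP[z zU ->] ->]].
    by exists (u *: V)%g; [apply/lcosetsP; exists u | rewrite hE].
  by exists z => //; rewrite hE.
rewrite [RHS]big_imset //= => C1 C2 /lcosetsP[z1 z1U ->] /lcosetsP[z2 z2U ->].
rewrite !hE // => e; apply/(@lcoset_eqP _ V); rewrite mem_lcoset inE groupM ?groupV //=.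
by rewrite sigM ?inS ?groupV // e sigK ?inS.
Qed.


Lemma rtrace_sum (V : {group (gT * gT)}) I (r : seq I) (P : pred I) (F : I -> A) :
  rtrace phi V U (\sum_(j <- r | P j) F j) = \sum_(j <- r | P j) rtrace phi V U (F j).
Proof.
rewrite /rtrace (eq_bigr _ (fun C _ => act_sum _ _ _ _)).
exact: exchange_big.
Qed.

Lemma rtraceZ (V : {group (gT * gT)}) c a :
  rtrace phi V U (c *: a) = c *: rtrace phi V U a.
Proof.
rewrite /rtrace scaler_sumr; apply: eq_bigr => C _; exact: actZ.
Qed.

Lemma kernel_nofix :
  (forall i, exists2 u, u \in U & sig u i != i) ->
  forall a, fixed_by phi U a -> brauer_kernel m phi U a.
Proof.
move=> nofix a fa; set c := coef a.
have cinv u j : u \in U -> c (sig u j) = c j.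
  move=> uU; rewrite /c -{1}(fa u uU) coef_act ?inS // sigK // inS ?groupV //.
have prop i : stabG i \proper U.
  rewrite properE; apply/andP; split; first by apply/subsetP => u; rewrite inE => /andP[].
  have [u uU su] := nofix i; apply/subsetPn; exists u => //.
  by rewrite inE uU.
pose f (V : {group (gT * gT)}) :=
  \sum_(i | (rep i == i) && (stab i == V)) c i *: b i.
exists 0%N, (fun _ => 0), (fun _ => 0), f; split.
- by case.
- move=> V v vV; rewrite /f act_sum; apply: eq_bigr => i /andP[_ /eqP e].
  move: vV; rewrite -e inE => /andP[vU /eqP sv].
  by rewrite actZ -sigE ?inS // sv.
rewrite big_ord0 add0r {1}(coefE a).
rewrite (partition_big rep (fun i => rep i == i)); last by move=> i _; rewrite rep_rep.
rewrite /f.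
rewrite (eq_bigr (fun V : {group (gT * gT)} => \sum_(i | (rep i == i) && (stab i == V)) c i *: rtrace phi V U (b i)));
  last by move=> V _; rewrite rtrace_sum; apply: eq_bigr => i _; rewrite rtraceZ.
rewrite (eq_bigr (fun V : {group (gT * gT)} => \sum_i (if (rep i == i) && (stab i == V) then c i *: rtrace phi V U (b i) else 0)));
  last by move=> V _; rewrite big_mkcond.
rewrite exchange_big /= [LHS]big_mkcond /=.
apply: eq_bigr => i _.
rewrite (bigD1 (stabG i)) ?prop //= eqxx andbT [X in _ + X]big1 ?addr0; last first.
  move=> V /andP[_ nV]; case: ifP => // /andP[_ /eqP e].
  by case/eqP: nV; apply: val_inj; rewrite /= -e.
case: ifP => // /eqP ri; rewrite rtrace_b scaler_sumr.
rewrite (eq_bigl (fun j => j \in orb i)); last by move=> j /=; rewrite rep_orb.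
apply: eq_bigr => j /imsetP[u uU ->]; by rewrite cinv.
Qed.

End Fix.

Lemma fix_exists (U : {group (gT * gT)}) : U \subset SS ->
  brauer_nonzero m phi U -> exists i, forall u, u \in U -> sig u i = i.
Proof.
move=> sUS [a [fa nk]].
case: (boolP [exists i, [forall u in U, sig u i == i]]) => [/existsP[i /forall_inP H]|H].
  by exists i => u uU; apply/eqP; apply: H.
exfalso; apply: nk; apply: kernel_nofix => // i.
by move/existsPn: H => /(_ i) /forall_inPn [u uU su]; exists u.
Qed.

Lemma act_fix_comm s t a : s \in S -> t \in S -> act (s, t) a = a -> phi s * a = a * phi t.
Proof.
by move=> sS tS e; rewrite -{2}e /act2 /= -!mulrA phiVl // mulr1.
Qed.

Lemma comm_inv s t a : s \in S -> t \in S -> phi s * a = a * phi t ->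
  phi (s^-1)%g * a = a * phi (t^-1)%g.
Proof.
move=> sS tS e.
by rewrite -[LHS]mulr1 -(phiVr tS) mulrA -(mulrA _ a) -e mulrA phiVl // mul1r.
Qed.

Lemma unit_conj (y y' c d : A) : y * y' = 1 -> y' * y = 1 -> c * y = y * d -> y' * c = d * y'.
Proof.
move=> e1 e2 e.
by rewrite -[LHS]mulr1 -e1 mulrA -(mulrA y') e mulrA e2 mul1r.
Qed.

Lemma morph1 (f : gT -> gT) (P : {set gT}) : group_set P ->
  {in P &, {morph f : x y / (x * y)%g}} -> f 1%g = 1%g.
Proof.
move=> /group_setP[P1 _] fM.
have h := fM _ _ P1 P1; rewrite mulg1 in h.
have := congr1 (fun z => ((f 1%g)^-1 * z)%g) h; rewrite /= mulVg mulKg.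
by move/esym.
Qed.

Lemma tw_group (f : gT -> gT) (P : {set gT}) : group_set P ->
  {in P &, {morph f : x y / (x * y)%g}} -> group_set (twdiag f P).
Proof.
move=> gP fM; have [P1 PM] := group_setP gP.
apply/group_setP; split.
  by apply/imsetP; exists 1%g => //; rewrite (morph1 gP fM).
move=> u v /imsetP[x xP ->] /imsetP[y yP ->]; apply/imsetP; exists (x * y)%g.
  exact: PM.
by rewrite fM.
Qed.

Lemma im_group (f : gT -> gT) (P : {set gT}) : group_set P ->
  {in P &, {morph f : x y / (x * y)%g}} -> group_set (f @: P).
Proof.
move=> gP fM; have [P1 PM] := group_setP gP.
apply/group_setP; split.
  by apply/imsetP; exists 1%g => //; rewrite (morph1 gP fM).
move=> u v /imsetP[x xP ->] /imsetP[y yP ->]; apply/imsetP; exists (x * y)%g.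
  exact: PM.
by rewrite fM.
Qed.

Lemma tw_sub (f : gT -> gT) (P : {set gT}) : P \subset S -> f @: P \subset S ->
  twdiag f P \subset SS.
Proof.
move=> sP sfP; apply/subsetP => u /imsetP[x xP ->]; rewrite in_setX /=.
by rewrite (subsetP sfP (f x)) ?imset_f // (subsetP sP x).
Qed.

Hypothesis pS : (p.-group S)%g.

Lemma tw_pgroup (f : gT -> gT) (P : {set gT}) (gP : group_set P) : P \subset S ->
  (p.-group (twdiag f P))%g.
Proof.
move=> sP; rewrite /pgroup card_imset; last by move=> x y /(congr1 snd).
exact: (pgroupS (H := Group gP) sP pS).
Qed.

Lemma nonzero_tw (f : gT -> gT) (P : {set gT}) (x L R : A) i :
  group_set P -> {in P &, {morph f : x y / (x * y)%g}} -> P \subset S ->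
  fixed_by phi (twdiag f P) x ->
  (forall u a, u \in twdiag f P -> coef (L * act u a * R) i = coef (L * a * R) i) ->
  coef (L * x * R) i = 1 ->
  brauer_nonzero m phi (twdiag f P).
Proof.
move=> gP fM sP fx tr e1; exists x; split => //.
apply: (trick (U := Group (tw_group gP fM)) (L := L) (R := R) (i := i)) => //.
  exact: tw_pgroup.
by rewrite e1.
Qed.

Lemma fix_tw (f : gT -> gT) (P : {set gT}) :
  group_set P -> {in P &, {morph f : x y / (x * y)%g}} -> P \subset S ->
  f @: P \subset S -> brauer_nonzero m phi (twdiag f P) ->
  exists i, forall x, x \in P -> phi (f x) * b i = b i * phi x.
Proof.
move=> gP fM sP sfP nz.
have [i Hi] := fix_exists (U := Group (tw_group gP fM)) (tw_sub sP sfP) nz.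
exists i => x xP.
have uU : (f x, x) \in twdiag f P by apply/imsetP; exists x.
have fxS : f x \in S by rewrite (subsetP sfP) // imset_f.
apply: act_fix_comm => //; first exact: (subsetP sP).
rewrite -sigE; first by rewrite Hi.
by rewrite (subsetP (tw_sub sP sfP)).
Qed.


Hypothesis bU : forall i, alg_unit (b i).
Hypothesis nzS : brauer_nonzero m phi (twdiag id S).

Lemma coef_act_fix u X i : u \in SS -> act (u^-1)%g (b i) = b i ->
  coef (act u X) i = coef X i.
Proof.
move=> uS e; rewrite coef_act //; congr (coef X _); apply: binj.
by rewrite sigE ?groupV.
Qed.

Lemma main_sec : divisible m S phi.
Proof.
have sidS : id @: S \subset S by apply/subsetP => x /imsetP[y yS ->].
have [ie He] := fix_tw (f := id) (P := S) (groupP S) (fun _ _ _ _ => erefl) (subxx _) sidS nzS.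
set e := b ie; rewrite /= in He.
have einv s X : s \in S -> coef (act (s, s) X) ie = coef X ie.
  move=> sS; apply: coef_act_fix; first by rewrite in_setX /= sS.
  rewrite /act2 /= invgK -/e.
  by rewrite (He _ (groupVr sS)) -mulrA phiVl // mulr1.
have coef_e : coef e ie = 1 by rewrite coef_b eqxx.
split.
- move=> P Q sPQ sQS; have sPS := subset_trans sPQ sQS.
  split.
  + by rewrite !groupP sPS sQS.
  + by [].
  + by [].
  + by apply/subsetP => x /imsetP[y yP ->]; apply: (subsetP sPQ).
  apply: (nonzero_tw (x := e) (L := 1) (R := 1) (i := ie)) => //.
  + exact: groupP.
  + move=> u /imsetP[x xP ->]; rewrite /act2 /= He ?(subsetP sPS) //.
    by rewrite -mulrA phiVr ?(subsetP sPS) // mulr1.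
  + move=> u a /imsetP[x xP ->]; rewrite mul1r mulr1 einv ?(subsetP sPS) //.
    by rewrite mul1r mulr1.
  + by rewrite mul1r mulr1.
- move=> P Q R f g [/and4P[gP sP gQ sQ] fM fI sfP nzf] [/and4P[_ _ gR sR] gM gI sgQ nzg].
  have sfPS := subset_trans sfP sQ.
  have sgQS := subset_trans sgQ sR.
  have fPQ x : x \in P -> f x \in Q by move=> xP; apply: (subsetP sfP); apply: imset_f.
  have PS x : x \in P -> x \in S by move=> xP; apply: (subsetP sP).
  have QS x : x \in Q -> x \in S by move=> xP; apply: (subsetP sQ).
  have [iy Hy] := fix_tw gP fM sP sfPS nzf.
  have [iz Hz] := fix_tw gQ gM sQ sgQS nzg.
  have [y' [yy' y'y]] := bU iy.
  have [z' [zz' z'z]] := bU iz.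
  have gfM : {in P &, {morph g \o f : x y / (x * y)%g}}.
    by move=> x1 x2 x1P x2P /=; rewrite fM // gM ?fPQ.
  split.
  + by rewrite gP sP gR sR.
  + exact: gfM.
  + by move=> x1 x2 x1P x2P /= e12; apply: fI => //; apply: gI => //; apply: fPQ.
  + apply/subsetP => _ /imsetP[x xP ->]; apply: (subsetP sgQ); exact: imset_f (fPQ _ xP).
  have Hz' x : x \in P -> z' * phi (g (f x)) = phi (f x) * z'.
    by move=> xP; apply: (unit_conj zz' z'z); rewrite Hz ?fPQ.
  have Hy' x : x \in P -> y' * phi (f x) = phi x * y'.
    by move=> xP; apply: (unit_conj yy' y'y); rewrite Hy.
  apply: (nonzero_tw (x := b iz * b iy) (L := e * (y' * z')) (R := 1) (i := ie)) => //.
  + move=> u /imsetP[x xP ->]; rewrite /act2 /=.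
    rewrite mulrA Hz ?fPQ // -(mulrA (b iz)) Hy // !mulrA -(mulrA _ (phi x)) phiVr ?PS //.
    by rewrite mulr1.
  + move=> u a /imsetP[x xP ->]; rewrite /act2 /=.
    have key : e * y' * z' * phi (g (f x)) = phi x * e * y' * z'.
      by rewrite -!mulrA Hz' // (mulrA y') Hy' // !mulrA He ?PS.
    by rewrite !mulr1 !mulrA key -[RHS](einv x) ?PS // /act2 /= !mulrA.
  + rewrite mulr1 -!mulrA (mulrA z') z'z mul1r y'y mulr1 //.
move=> P Q f [/and4P[gP sP gQ sQ] fM fI sfP nzf].
have sfPS := subset_trans sfP sQ.
have PS x : x \in P -> x \in S by move=> xP; apply: (subsetP sP).
have fPS x : x \in P -> f x \in S by move=> xP; apply: (subsetP sfPS); apply: imset_f.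
have [iy Hy] := fix_tw gP fM sP sfPS nzf.
have [y' [yy' y'y]] := bU iy.
have gfP := im_group gP fM.
have [_ PM] := group_setP gP.
split.
  split => //; first by rewrite gP sP gfP sfPS.
pose g z := odflt z [pick x in P | f x == z].
have gK : {in P, cancel f g}.
  move=> x xP; rewrite /g; case: pickP => [x' /andP[x'P /eqP ex]|/(_ x)] /=.
    exact: fI.
  by rewrite xP eqxx.
have fK : {in f @: P, cancel g f} by move=> _ /imsetP[x xP ->]; rewrite gK.
exists g; split => //.
have gM : {in f @: P &, {morph g : x y / (x * y)%g}}.
  move=> _ _ /imsetP[x1 x1P ->] /imsetP[x2 x2P ->].
  by rewrite -fM // !gK // PM.
split.
- by rewrite gfP sfPS gP sP.
- exact: gM.
- by move=> z1 z2 z1P z2P e12; rewrite -(fK z1) // -(fK z2) // e12.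
- by apply/subsetP => _ /imsetP[z /imsetP[x xP ->] ->]; rewrite gK.
have Hy' x : x \in P -> y' * phi (f x) = phi x * y'.
  by move=> xP; apply: (unit_conj yy' y'y); rewrite Hy.
have Hyi x : x \in P -> phi ((f x)^-1)%g * b iy = b iy * phi (x^-1)%g.
  by move=> xP; apply: comm_inv; rewrite ?fPS ?PS ?Hy.
apply: (nonzero_tw (x := y') (L := e) (R := b iy) (i := ie) gfP gM sfPS).
- move=> u /imsetP[_ /imsetP[x xP ->] ->]; rewrite gK // /act2 /=.
  by rewrite -Hy' // -mulrA phiVr ?fPS // mulr1.
- move=> u a /imsetP[_ /imsetP[x xP ->] ->]; rewrite gK // /act2 /=.
  rewrite -[RHS](einv x) ?PS // /act2 /= -!mulrA Hyi // !mulrA He ?PS //.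
- by rewrite -mulrA y'y mulr1.
Qed.

End Main.

Unset Implicit Arguments.
Set Strict Implicit.

Theorem lemma2p7 (O : idomainType) (m : O -> Prop) (p : nat)
    (A : algType O) (gT : finGroupType) (S : {group gT}) (phi : gT -> A) :
  standing_O m p ->
  (p.-group S)%g ->
  bifree S phi ->
  brauer_nonzero m phi (twdiag id S) ->
  (exists (n : nat) (b : 'I_n -> A),
     [/\ is_basis b, SS_invariant S phi b &
         forall i, alg_unit (b i)]) ->
  divisible m S phi.
Proof.
move=> [[mI m1 _] _ _ _ [pr mp]] pS [[phi1 phiM] _] nzS [n [b [bB bI bU]]].
exact: (main_sec mI m1 mp phi1 phiM bB bI pS bU nzS).
Qed.
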